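(* Let $S$ be a right LCM monoid, let $F$ be an accurate foundation set for $S$ and let $s\in S_c$. Then $s\cdot F=\{sf\mid f\in F\}$ and $F\cdot s=\{fs\mid f\in F\}$ are accurate foundation sets for $S$. Moreover, for every unital $*$-homomorphism $\pi$ from $C^*(S)$ into a unital $C^*$-algebra, the relation $\sum_{f\in s\cdot F}\pi(e_{fS})=1$ holds if and only if both $\sum_{f\in F}\pi(e_{fS})=1$ and $\pi(v_sv_s^* )=1$ hold; and likewise the relation $\sum_{f\in F\cdot s}\pi(e_{fS})=1$ holds if and only if both $\sum_{f\in F}\pi(e_{fS})=1$ and $\pi(v_sv_s^* )=1$ hold.
   Context: A right LCM monoid is a countable discrete monoid $S$ that is left cancellative and such that for all $s,t\in S$ the intersection $sS\cap tS$ is either empty or equal to $rS$ for some $r\in S$. A finite subset $F\subset S$ is a foundation set if for every $t\in S$ there is $s\in F$ with $sS\cap tS\neq\emptyset$; it is accurate if $fS\cap f'S=\emptyset$ for distinct $f,f'\in F$. The core subsemigroup is $S_c=\{s\in S\mid sS\cap tS\neq\emptyset \text{ for all } t\in S\}$. The full semigroup $C^*$-algebra $C^*(S)$ (in the sense of Li) is the universal $C^*$-algebra generated by isometries $\{v_s: s\in S\}$ and projections $\{e_X : X\in\mathcal{J}(S)\}$, where $\mathcal{J}(S)=\{\emptyset\}\cup\{sS: s\in S\}$, subject to $v_{st}=v_sv_t$, $v_se_Xv_s^*=e_{sX}$, $e_S=1$, $e_\emptyset=0$, $e_Xe_Y=e_{X\cap Y}$; in particular $e_{sS}=v_sv_s^*$.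 *)

(* Defs.v *)
From HB Require Import structures.
From mathcomp Require Import all_boot all_order all_algebra.
From mathcomp Require Import boolp classical_sets reals.
From mathcomp.real_closed Require Import complex.
From mathcomp Require Import finmap.

Set Implicit Arguments.
Unset Strict Implicit.
Unset Printing Implicit Defensive.

Import Order.TTheory GRing.Theory Num.Theory.
Local Open Scope classical_set_scope.
Local Open Scope ring_scope.

Definition rideal (S : Type) (mul : S -> S -> S) (s : S) : set S :=
  [set mul s a | a in [set: S]].

Definition is_monoid (S : Type) (mul : S -> S -> S) (one : S) : Prop :=
  [/\ (forall x y z, mul x (mul y z) = mul (mul x y) z),
      (forall x, mul one x = x) & (forall x, mul x one = x)].

Definition left_cancellative (S : Type) (mul : S -> S -> S) : Prop :=
  forall s x y, mul s x = mul s y -> x = y.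

Definition right_LCM_prop (S : Type) (mul : S -> S -> S) : Prop :=
  forall s t, rideal mul s `&` rideal mul t = set0 \/
              exists r, rideal mul s `&` rideal mul t = rideal mul r.

Definition is_right_LCM_monoid (S : countType) (mul : S -> S -> S) (one : S)
  : Prop :=
  [/\ is_monoid mul one, left_cancellative mul & right_LCM_prop mul].

Definition foundation_set (S : countType) (mul : S -> S -> S) (F : {fset S})
  : Prop :=
  forall t, exists2 s, s \in F & rideal mul s `&` rideal mul t !=set0.

Definition accurate (S : countType) (mul : S -> S -> S) (F : {fset S}) : Prop :=
  forall f f', f \in F -> f' \in F -> f <> f' ->
    rideal mul f `&` rideal mul f' = set0.

Definition core_elt (S : Type) (mul : S -> S -> S) (s : S) : Prop :=
  forall t, rideal mul s `&` rideal mul t !=set0.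

Definition lmul_fset (S : countType) (mul : S -> S -> S) (s : S) (F : {fset S})
  : {fset S} := [fset mul s f | f in F]%fset.
Definition rmul_fset (S : countType) (mul : S -> S -> S) (F : {fset S}) (s : S)
  : {fset S} := [fset mul f s | f in F]%fset.

Definition JS (S : Type) (mul : S -> S -> S) (X : set S) : Prop :=
  X = set0 \/ exists s, X = rideal mul s.

Definition is_unital_cstar_algebra (R : realType) (A : algType R[i])
  (star : A -> A) (nrm : A -> R) : Prop :=
      (forall x y, star (x + y) = star x + star y) /\
      (forall (c : R[i]) x, star (c *: x) = conjc c *: star x) /\
      (forall x y, star (x * y) = star y * star x) /\
      (forall x, star (star x) = x) /\
      (forall x, nrm x = 0 -> x = 0) /\
      (forall x y, nrm (x + y) <= nrm x + nrm y) /\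
      (forall (c : R[i]) x, nrm (c *: x) = ComplexField.Normc.normc c * nrm x) /\
      (forall x y, nrm (x * y) <= nrm x * nrm y) /\
      (forall x, nrm (star x * x) = nrm x ^+ 2) /\
      (forall u : nat -> A,
         (forall e : R, 0 < e -> exists N, forall m n, (N <= m)%N -> (N <= n)%N ->
              nrm (u m - u n) < e) ->
         exists l, forall e : R, 0 < e -> exists N, forall n, (N <= n)%N ->
              nrm (u n - l) < e).

(* Unital *-homomorphisms pi : C*(S) -> A correspond, by the universal
   property of Li's full semigroup C*-algebra C*(S), exactly to families
   V s := pi(v_s), E X := pi(e_X) (X ∈ J(S)) in A satisfying the defining
   relations of C*(S).  [li_rep] states these relations.                  *)
Definition li_rep (S : countType) (mul : S -> S -> S) (one : S)
  (R : realType) (A : algType R[i]) (star : A -> A)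
  (V : S -> A) (E : set S -> A) : Prop :=
      (forall s, star (V s) * V s = 1) /\
      (forall X, JS mul X -> star (E X) = E X /\ E X * E X = E X) /\
      (forall s t, V (mul s t) = V s * V t) /\
      (forall s X, JS mul X -> V s * E X * star (V s) = E (mul s @` X)) /\
      E [set: S] = 1 /\
      E set0 = 0 /\
      (forall X Y, JS mul X -> JS mul Y -> E X * E Y = E (X `&` Y)).

(* Main.v *)
Require Import Defs.
From HB Require Import structures.
From mathcomp Require Import all_boot all_order all_algebra.
From mathcomp Require Import boolp classical_sets reals.
From mathcomp.real_closed Require Import complex.
From mathcomp Require Import finmap.
Import Order.TTheory GRing.Theory Num.Theory.
Local Open Scope classical_set_scope.
Local Open Scope ring_scope.

Lemma rideal_img (S : Type) (mul : S -> S -> S)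
  (assoc : forall x y z, mul x (mul y z) = mul (mul x y) z) s f :
  mul s @` rideal mul f = rideal mul (mul s f).
Proof.
apply/seteqP; split => x /=.
- by case=> y [a _ <-] <-; exists a => //; rewrite assoc.
- by case=> a _ <-; exists (mul f a); [exists a | rewrite assoc].
Qed.

Lemma rideal_mem (S : Type) (mul : S -> S -> S) s a : rideal mul s (mul s a).
Proof. by exists a. Qed.

Lemma acc_eq (S : countType) (mul : S -> S -> S) (F : {fset S}) :
  accurate mul F -> forall f f' a b, f \in F -> f' \in F ->
  mul f a = mul f' b -> f = f'.
Proof.
move=> HFa f f' a b Ff Ff' e; case: (eqVneq f f') => // /eqP ne.
have := HFa f f' Ff Ff' ne => E0.
have : (rideal mul f `&` rideal mul f') (mul f a).
  by split; [exists a | exists b].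
by rewrite E0.
Qed.

Theorem corollary2p4 (S : countType) (mul : S -> S -> S) (one : S)
  (HS : is_right_LCM_monoid mul one)
  (F : {fset S}) (HFf : foundation_set mul F) (HFa : accurate mul F)
  (s : S) (Hs : core_elt mul s) :
  [/\ foundation_set mul (lmul_fset mul s F) /\ accurate mul (lmul_fset mul s F),
      foundation_set mul (rmul_fset mul F s) /\ accurate mul (rmul_fset mul F s) &
      forall (R : realType) (A : algType R[i]) (star : A -> A) (nrm : A -> R),
        is_unital_cstar_algebra star nrm ->
        forall (V : S -> A) (E : set S -> A), li_rep mul one star V E ->
        ((\sum_(f <- lmul_fset mul s F) E (rideal mul f) = 1) <->
           ((\sum_(f <- F) E (rideal mul f) = 1) /\ V s * star (V s) = 1)) /\
        ((\sum_(f <- rmul_fset mul F s) E (rideal mul f) = 1) <->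
           ((\sum_(f <- F) E (rideal mul f) = 1) /\ V s * star (V s) = 1))].
Proof.
case: HS => [[assoc mul1 _] canc _].
have accE := @acc_eq _ _ _ HFa.
split.
- split.
  + move=> t; have [x [[a _ Ha] [b _ Hb]]] := Hs t.
    have [f Ff [y [[c _ Hc] [d _ Hd]]]] := HFf a.
    exists (mul s f); first by apply/imfsetP; exists f.
    exists (mul (mul s f) c); split; first by exists c.
    exists (mul b d) => //.
    by rewrite assoc Hb -Ha -assoc Hd -assoc Hc.
  + move=> g g' /imfsetP[f Ff ->] /imfsetP[f' Ff' ->] ne.
    apply/seteqP; split => x //= [[a _ Ha] [b _ Hb]].
    apply: ne; congr (mul s _); apply: (accE f f' a b Ff Ff').
    by apply: (canc s); rewrite !assoc Ha Hb.
- split.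
  + move=> t; have [f Ff [y [[c _ Hc] [d _ Hd]]]] := HFf t.
    have [x [[a _ Ha] [b _ Hb]]] := Hs c.
    exists (mul f s); first by apply/imfsetP; exists f.
    exists (mul (mul f s) a); split; first by exists a.
    exists (mul d b) => //.
    by rewrite -assoc Ha -Hb assoc Hd -Hc -assoc.
  + move=> g g' /imfsetP[f Ff ->] /imfsetP[f' Ff' ->] ne.
    apply/seteqP; split => x //= [[a _ Ha] [b _ Hb]].
    apply: ne; congr (mul _ s); apply: (accE f f' (mul s a) (mul s b) Ff Ff').
    by rewrite !assoc Ha Hb.
move=> R A star nrm _ V E HL; have [Viso [Eproj [Vmul [VE [ET [E0 EI]]]]]] := HL.
have JSr f : JS mul (rideal mul f) by right; exists f.
have eV f : E (rideal mul f) = V f * star (V f).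
  have JST : JS mul [set: S].
    right; exists one; apply/seteqP; split => x // _; exists x => //.
  have := VE f setT JST; rewrite ET mulr1 => <-; by [].

have ErV f a : E (rideal mul (mul f a)) = V f * E (rideal mul a) * star (V f).
  by rewrite VE // rideal_img.
have orth f f' : f \in F -> f' \in F -> f != f' ->
    E (rideal mul f) * E (rideal mul f') = 0.
  move=> Ff Ff' /eqP ne; rewrite EI // HFa //.
set P := \sum_(f <- F) E (rideal mul f).
have injl : {in F &, injective (mul s)} by move=> x y _ _; apply: canc.
have injr : {in F &, injective (mul^~ s)}.
  by move=> x y Fx Fy e; apply: (accE x y s s).
split.
- rewrite /lmul_fset big_imfset //=.
  have -> : \sum_(i <- F) E (rideal mul (mul s i)) = V s * P * star (V s).
    by rewrite /P mulr_sumr mulr_suml; apply: eq_bigr => f _; rewrite ErV.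
  split.
  + move=> H.
    have HP : P = 1.
      have : star (V s) * (V s * P * star (V s)) * V s = star (V s) * 1 * V s.
        by rewrite H.
      by rewrite mulr1 Viso !mulrA Viso mul1r -mulrA Viso mulr1.
    by split => //; rewrite -H HP mulr1.
  + by case=> -> H2; rewrite mulr1.
- rewrite /rmul_fset big_imfset //=.
  set Q := \sum_(i <- F) E (rideal mul (mul i s)).
  split.
  + move=> HQ.
    have PQ : P * Q = Q.
      rewrite /Q mulr_sumr; apply: eq_big_seq => g Fg.
      rewrite /P mulr_suml (bigD1_seq g) //=;  
      rewrite big1_seq ?addr0.
        rewrite EI // setIidr // => x [a _ <-]; exists (mul s a) => //.
      move=> f /andP[ne Ff]; rewrite EI //.
      have ne2 : f <> g by apply/eqP.
      have := HFa f g Ff Fg ne2 => E00.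
      suff -> : rideal mul f `&` rideal mul (mul g s) = set0 by [].
      apply/seteqP; split => x // [Hf [a _ Hx]].
      have : (rideal mul f `&` rideal mul g) x.
        by split => //; exists (mul s a) => //; rewrite assoc.
      by rewrite E00.
    have HP : P = 1 by rewrite -[P]mulr1 -HQ PQ.
    split => //.
    have [f0 Ff0 _] := HFf one.
    have z g : g \in F -> g != f0 -> star (V f0) * V g = 0.
      move=> Fg ne.
      have e1 : star (V f0) = star (V f0) * E (rideal mul f0).
        by rewrite eV mulrA Viso mul1r.
      have e2 : V g = E (rideal mul g) * V g.
        by rewrite eV -mulrA Viso mulr1.
      rewrite e1 e2 mulrA -[star (V f0) * _ * _]mulrA orth ?mulr0 ?mul0r //.
      by rewrite eq_sym.
    have key : star (V f0) * Q * V f0 = E (rideal mul s).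
      rewrite /Q mulr_sumr mulr_suml (bigD1_seq f0) //=.
      rewrite big1_seq ?addr0.
        by rewrite ErV !mulrA Viso mul1r -mulrA Viso mulr1.
      move=> g /andP[ne Fg].
      by rewrite ErV !mulrA z // !mul0r.
    by rewrite -eV -key HQ mulr1 Viso.
  + case=> HP Hv; rewrite -HP /Q; apply: eq_bigr => f _.
    by rewrite ErV eV Hv mulr1 eV.
Qed.
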